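(* Let $\mathcal S$ be a finite state set with $n = |\mathcal S|$, and let $\mathcal S_T\subset\mathcal S$ be a nonempty set of terminal states with $m=|\mathcal S_T|$. Let $\mathbf P$ be an $n\times n$ row-stochastic matrix (the transition matrix induced by a default policy) in which every terminal state is absorbing: $\mathbf P(s_T,s_T)=1$ for all $s_T\in\mathcal S_T$. Fix $\lambda>0$ and rewards $r(s)<0$ for all non-terminal $s\in\mathcal S\setminus\mathcal S_T$, and for $\delta>0$ set $r(s_T) = -\delta$ for every $s_T\in\mathcal S_T$. Let $\mathbf R_\delta = \operatorname{diag}(\exp(-\mathbf r/\lambda))$ and $\mathbf Z_\delta = (\mathbf R_\delta - \mathbf P)^{-1}$ (the default representation). Then, as $\delta\to 0^+$, the columns of $\mathbf Z_\delta$ corresponding to the terminal states form a basis of the eigenspace of the principal eigenvalue of $\mathbf Z_\delta$. Precisely: $\mathbf R_\delta-\mathbf P$ is invertible for every $\delta>0$; there is $\delta_0>0$ such that for all $\delta\in(0,\delta_0)$ the eigenvalue of $\mathbf Z_\delta$ of largest modulus is $1/(e^{\delta/\lambda}-1)$ and its eigenspace $\mathcal E_\delta$ has dimension $m$; the span $\mathcal C_\delta$ of the $m$ columns of $\mathbf Z_\delta$ indexed by $\mathcal S_T$ has dimension $m$; and $\mathcal C_\delta$ converges to $\mathcal E_\delta$ as $\delta\to0^+$, in the sense that $\|\Pi_{\mathcal C_\delta} - \Pi_{\mathcal E_\delta}\|\to 0$, where $\Pi_{\mathcal W}$ denotes the orthogonal projector onto a subspace $\mathcal W$.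
   Context: $\exp$ and $\operatorname{diag}$ act entrywise, so $\mathbf R_\delta$ is the diagonal matrix with entries $e^{-r(s)/\lambda}$. The principal eigenvalue of a matrix is its eigenvalue of largest modulus. The matrix $\mathbf Z_\delta$ is not symmetrized here. *)

(* Defs.v *)
From HB Require Import structures.
From mathcomp Require Import all_boot all_order all_algebra.
From mathcomp Require Import complex.
From mathcomp Require Import all_classical all_reals all_analysis.
Set Implicit Arguments. Unset Strict Implicit. Unset Printing Implicit Defensive.
Import Order.TTheory GRing.Theory Num.Theory.
Local Open Scope ring_scope.

(* Matrices act on COLUMN vectors as in the paper; MathComp's mxalgebra works
   with row spaces, so right eigenvectors / columns of Z are handled through
   the transpose Z^T. *)

Definition row_stochastic (R : realType) (n : nat) (P : 'M[R]_n) : Prop :=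
  (forall i j, 0 <= P i j) /\ (forall i, \sum_j P i j = 1).

Definition reward_delta (R : realType) (n : nat) (ST : {set 'I_n})
  (r : 'I_n -> R) (delta : R) : 'I_n -> R :=
  fun s => if s \in ST then - delta else r s.

Definition R_delta (R : realType) (n : nat) (ST : {set 'I_n})
  (r : 'I_n -> R) (lam delta : R) : 'M[R]_n :=
  diag_mx (\row_s expR (- reward_delta ST r delta s / lam)).

Definition Z_delta (R : realType) (n : nat) (ST : {set 'I_n}) (P : 'M[R]_n)
  (r : 'I_n -> R) (lam delta : R) : 'M[R]_n :=
  invmx (R_delta ST r lam delta - P).

Definition cplx_mx (R : realType) (n : nat) (A : 'M[R]_n) : 'M[R[i]]_n :=
  map_mx (fun x => (x%:C)%C) A.

Definition principal_eigenvalue (R : realType) (n : nat) (A : 'M[R]_n) (x : R)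
  : Prop :=
  eigenvalue (cplx_mx A) (x%:C)%C /\
  forall mu : R[i], eigenvalue (cplx_mx A) mu -> mu != (x%:C)%C ->
    `|mu| < `|(x%:C)%C|.

(* Eigenspace of A (acting on column vectors) for the eigenvalue a, encoded as
   a row space: {v | A v = a v} = row space of eigenspace A^T a. *)
Definition right_eigenspace (R : realType) (n : nat) (A : 'M[R]_n) (a : R)
  : 'M[R]_n := eigenspace A^T a.

(* Span of the columns of A indexed by ST, encoded as a row space: rows of A^T
   indexed by ST (the other rows are zeroed out). *)
Definition cols_span (R : realType) (n : nat) (ST : {set 'I_n}) (A : 'M[R]_n)
  : 'M[R]_n := diag_mx (\row_i (i \in ST)%:R) *m A^T.

Definition orth_proj (R : realType) (n : nat) (W : 'M[R]_n) : 'M[R]_n :=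
  let B := row_base W in (B^T *m invmx (B *m B^T) *m B).

(* Main.v *)
Require Import Defs.
From HB Require Import structures.
From mathcomp Require Import all_boot all_order all_algebra.
From mathcomp Require Import complex.
From mathcomp Require Import all_classical all_reals all_analysis.
From mathcomp Require Import ring lra.
Import Order.TTheory GRing.Theory Num.Theory.
Import numFieldNormedType.Exports.
Local Open Scope classical_set_scope.
Local Open Scope ring_scope.
Section Gen.
Context {F : numFieldType}.

Lemma seq_max (T : eqType) (s : seq T) (g : T -> F) : s != [::] ->
  (forall t, g t \is Num.real) -> exists2 i, i \in s & forall j, j \in s -> g j <= g i.
Proof.
elim: s => [|a s IH _ greal]; first by rewrite eqxx.
case: s IH => [|b s] IH.
  by exists a; rewrite ?mem_head // => j; rewrite inE => /eqP->.
have [i is_ Hi] := IH isT greal.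
have /orP[le|le] := real_leVge (greal a) (greal i).
- exists i; first by rewrite inE is_ orbT.
  by move=> j; rewrite inE => /orP[/eqP->//|]; exact: Hi.
- exists a; first by rewrite mem_head.
  by move=> j; rewrite inE => /orP[/eqP->//|/Hi]; move=> h; exact: le_trans h le.
Qed.

Definition Mdom {n} (D : 'I_n -> F) (Q : 'M[F]_n) : 'M[F]_n :=
  \matrix_(i, j) ((i == j)%:R * D i - Q i j).

Lemma Mdom_row n (D : 'I_n -> F) (Q : 'M[F]_n) (x : 'cV[F]_n) (i : 'I_n) :
  (Mdom D Q *m x) i 0 = D i * x i 0 - \sum_j Q i j * x j 0.
Proof.
rewrite mxE; under eq_bigr do rewrite mxE mulrBl.
rewrite sumrB; congr (_ - _).
rewrite (bigD1 i) //= eqxx mul1r big1 ?addr0 // => j /negbTE.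
by rewrite eq_sym => ->; rewrite !mul0r.
Qed.

Lemma dom_ker n (D : 'I_n -> F) (Q : 'M[F]_n) nu (x : 'cV[F]_n) :
  (forall i j, 0 <= Q i j) -> (forall i, \sum_j Q i j = 1) ->
  Mdom D Q *m x = nu *: x ->
  (forall i, x i 0 != 0 -> 1 < `|D i - nu|) -> x = 0.
Proof.
move=> Q0 Q1 Hx HD.
case: n D Q x Hx HD Q0 Q1 => [|n] D Q x Hx HD Q0 Q1.
  by apply/matrixP => -[].
have ne : enum 'I_n.+1 != [::] by rewrite -size_eq0 size_enum_ord.
have [i _ Hi] := @seq_max _ (enum 'I_n.+1) (fun j => `|x j 0|) ne (fun t => normr_real _).
suff xi0 : x i 0 = 0.
  apply/matrixP => j k; rewrite (ord1 k) mxE; apply/eqP.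
  have := Hi j (mem_enum _ _); rewrite xi0 normr0 => h.
  by rewrite -normr_eq0 eq_le h normr_ge0.
apply/eqP; apply/negPn/negP => nz; have H1 := HD i nz.
have E : (D i - nu) * x i 0 = \sum_j Q i j * x j 0.
  have := congr1 (fun M : 'cV[F]_n.+1 => M i 0) Hx; rewrite Mdom_row mxE => h.
  by rewrite mulrBl -h opprB addrC subrK.
have : `|D i - nu| * `|x i 0| <= `|x i 0|.
  rewrite -normrM E (le_trans (ler_norm_sum _ _ _)) //.
  apply: (@le_trans _ _ (\sum_j Q i j * `|x i 0|)).
    apply: ler_sum => j _; rewrite normrM ger0_norm //.
    by apply: ler_wpM2l => //; apply: Hi; rewrite mem_enum.
  by rewrite -mulr_suml Q1 mul1r.
have xp : 0 < `|x i 0| by rewrite normr_gt0.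
rewrite -{2}[`|x i 0|]mul1r ler_pM2r //.
by move=> h; have := lt_le_trans H1 h; rewrite ltxx.
Qed.

End Gen.

Lemma unit_of_ker (K : fieldType) n (A : 'M[K]_n) :
  (forall x : 'cV_n, A *m x = 0 -> x = 0) -> A \in unitmx.
Proof.
move=> H; rewrite -unitmx_tr -row_free_unit -kermx_eq0; apply/eqP/row_matrixP => i.
rewrite row0; apply: trmx_inj; rewrite trmx0; apply: H.
apply: trmx_inj; rewrite trmx_mul trmxK -row_mul mulmx_ker row0 trmx0 //.
Qed.
Lemma Mrow_mul (F : numFieldType) n (A : 'M[F]_n) (x : 'cV[F]_n) (t : 'I_n) c :
  (forall j, A t j = (t == j)%:R * c) -> (A *m x) t 0 = c * x t 0.
Proof.
move=> H; rewrite mxE (bigD1 t) //= H eqxx mul1r big1 ?addr0 // => j /negbTE.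
by rewrite H eq_sym => ->; rewrite !mul0r.
Qed.

Lemma eig_exists (F : numFieldType) n (A : 'M[F]_n) (t : 'I_n) (c : F) :
  (forall j, A t j = (t == j)%:R * c) -> A \in unitmx -> c != 0 ->
  eigenvalue (invmx A) c^-1.
Proof.
move=> Ht Au c0; apply/eigenvalueP; exists (delta_mx 0 t); last first.
  apply/eqP => /matrixP /(_ 0 t); rewrite !mxE !eqxx /= => /eqP.
  by rewrite oner_eq0.
have E : (delta_mx 0 t : 'rV[F]_n) *m A = c *: delta_mx 0 t.
  apply/rowP => j; rewrite !mxE (bigD1 t) //= big1 ?addr0; last by move=> k /negbTE; rewrite !mxE eq_sym => ->; rewrite andbF mul0r.
  rewrite !mxE !eqxx /= mul1r Ht mulrC.
  by rewrite eq_sym.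
have H : (delta_mx 0 t : 'rV[F]_n) = c *: (delta_mx 0 t *m invmx A).
  by rewrite scalemxAl -E -mulmxA mulmxV // mulmx1.
by rewrite {2}H scalerA mulVf // scale1r.
Qed.

Lemma eig_bound (F : numFieldType) n (D : 'I_n -> F) (Q : 'M[F]_n) (S : pred 'I_n) (c mu : F) :
  (forall i j, 0 <= Q i j) -> (forall i, \sum_j Q i j = 1) ->
  (forall t, S t -> forall j, Mdom D Q t j = (t == j)%:R * c) ->
  (forall i, ~~ S i -> 1 + c < `|D i|) -> 0 < c -> Mdom D Q \in unitmx ->
  eigenvalue (invmx (Mdom D Q)) mu -> mu != c^-1 -> `|mu| < c^-1.
Proof.
move=> Q0 Q1 HS HN c0 Mu ev neq.
have cR : c^-1 \is Num.real by rewrite realE invr_ge0 ltW.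
rewrite real_ltNge ?normr_real //; apply/negP => le.
have mu0 : mu != 0.
  apply/eqP => mu0; move: le; rewrite mu0 normr0 => le.
  have c1 : 0 < c^-1 by rewrite invr_gt0.
  by have := lt_le_trans c1 le; rewrite ltxx.
move: ev; rewrite /eigenvalue /eigenspace kermx_eq0 row_free_unit => /negP; apply.
apply: unit_of_ker => x Hx.
set M := Mdom D Q in Mu Hx *.
have Zx : invmx M *m x = mu *: x.
  by move/eqP: Hx; rewrite mulmxBl subr_eq0 mul_scalar_mx => /eqP.
have Mx : M *m x = mu^-1 *: x.
  have H : x = mu *: (M *m x) by rewrite scalemxAr -Zx mulmxA mulmxV // mul1mx.
  by rewrite {2}H scalerA mulVf // scale1r.
apply: (@dom_ker _ _ _ _ _ _ Q0 Q1 Mx) => i xi.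
case Si: (S i).
  have := congr1 (fun y : 'cV[F]_n => y i 0) Mx.
  rewrite (@Mrow_mul _ _ M x i c (HS i Si)) mxE => /eqP; rewrite -subr_eq0 -mulrBl mulf_eq0 (negbTE xi) orbF subr_eq0 => /eqP ceq.
  by move: neq; rewrite ceq invrK eqxx.
have hn : `|mu^-1| <= c.
  rewrite normrV ?unitfE //; rewrite -[c]invrK lef_pV2 ?posrE ?invr_gt0 ?normr_gt0 //.
apply: (lt_le_trans _ (lerB_dist _ _)).
rewrite ltrBrDr; apply: (le_lt_trans _ (HN i (negbT Si))).
by rewrite lerD2l.
Qed.
Section Proj.
Context {R : realFieldType}.

Definition proj {k n} (B : 'M[R]_(k, n)) : 'M[R]_n :=
  B^T *m invmx (B *m B^T) *m B.

Lemma BBt_unit k n (B : 'M[R]_(k, n)) : row_free B -> B *m B^T \in unitmx.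
Proof.
move=> fB; apply: unit_of_ker => x Hx.
have y0 : B^T *m x = 0.
  have : x^T *m (B *m B^T *m x) = 0 by rewrite Hx mulmx0.
  rewrite !mulmxA -(mulmxA (x^T *m B)) -{1}[B]trmxK -trmx_mul.
  set y := B^T *m x => /matrixP /(_ 0 0); rewrite !mxE => h.
  apply/matrixP => i j; rewrite (ord1 j) mxE.
  have nn : forall l, true -> 0 <= y^T 0 l * y l 0.
    by move=> l _; rewrite !mxE -expr2 sqr_ge0.
  have := @psumr_eq0P _ _ _ (fun l => y^T 0 l * y l 0) nn h i isT.
  by rewrite !mxE => /eqP; rewrite mulf_eq0 orbb => /eqP.
apply: trmx_inj; rewrite trmx0; apply/eqP.
by rewrite -(mulmx_free_eq0 _ fB) -[B]trmxK -trmx_mul y0 trmx0.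
Qed.

Lemma proj_in k n (B : 'M[R]_(k, n)) (u : 'rV_k) : row_free B ->
  (u *m B) *m proj B = u *m B.
Proof.
move=> fB; rewrite /proj !mulmxA -(mulmxA u B B^T) -(mulmxA u (B *m B^T)) mulmxV ?BBt_unit // mulmx1 //.
Qed.

Lemma proj_orth k n (B : 'M[R]_(k, n)) (w : 'rV_n) :
  w *m B^T = 0 -> w *m proj B = 0.
Proof. by move=> h; rewrite /proj !mulmxA h !mul0mx. Qed.

Lemma proj_res k n (B : 'M[R]_(k, n)) (v : 'rV_n) : row_free B ->
  (v - v *m proj B) *m B^T = 0.
Proof.
move=> fB; rewrite mulmxBl /proj -!mulmxA.
by rewrite mulVmx ?BBt_unit // mulmx1 subrr.
Qed.

Lemma proj_eq k1 k2 n (B1 : 'M[R]_(k1, n)) (B2 : 'M[R]_(k2, n)) :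
  row_free B1 -> row_free B2 -> (B1 <= B2)%MS -> (B2 <= B1)%MS -> proj B1 = proj B2.
Proof.
move=> f1 f2 s12 s21; apply/row_matrixP => i; rewrite !rowE.
set v := delta_mx 0 i.
have -> : v *m proj B2 = v *m proj B1 *m proj B2 + (v - v *m proj B1) *m proj B2.
  by rewrite -mulmxDl addrC subrK.
rewrite [X in _ + X]proj_orth ?addr0; last first.
  rewrite -(mulmxKpV s21) trmx_mul mulmxA proj_res // mul0mx //.
have e : v *m proj B1 = (v *m B1^T *m invmx (B1 *m B1^T) *m (B1 *m pinvmx B2)) *m B2.
  by rewrite -mulmxA mulmxKpV // /proj !mulmxA.
by rewrite e proj_in.
Qed.

End Proj.

Lemma orth_projE (R : realType) k n (W : 'M[R]_n) (B : 'M[R]_(k, n)) :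
  row_free B -> (B <= W)%MS -> (W <= B)%MS -> orth_proj W = proj B.
Proof.
move=> fB s1 s2; rewrite /orth_proj; apply: proj_eq => //.
- exact: row_base_free.
- by rewrite eq_row_base.
- by rewrite eq_row_base.
Qed.

Lemma cplx_Mdom (R : realType) n (D : 'I_n -> R) (Q : 'M[R]_n) :
  cplx_mx (Mdom D Q) = Mdom (fun i => (D i)%:C%C) (cplx_mx Q).
Proof.
apply/matrixP => i j; rewrite !mxE rmorphB rmorphM /=; congr (_ * _ - _).
by case: (i == j); rewrite /= ?rmorph1 ?rmorph0.
Qed.

Lemma cplx_mxE (R : realType) n (A : 'M[R]_n) : cplx_mx A = map_mx (real_complex R) A.
Proof. by []. Qed.

Section Main.
Variable R : realType.
Variables (n : nat) (ST : {set 'I_n}) (P : 'M[R]_n) (lam : R) (r : 'I_n -> R).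
Hypothesis Pst : row_stochastic P.
Hypothesis Pabs : forall t, t \in ST -> P t t = 1.
Hypothesis lam0 : 0 < lam.
Hypothesis rneg : forall s, s \notin ST -> r s < 0.
Hypothesis STne : (0 < #|ST|)%N.

Lemma P0 i j : 0 <= P i j. Proof. by case: Pst. Qed.
Lemma P1 i : \sum_j P i j = 1. Proof. by case: Pst. Qed.

Lemma Pterm t j : t \in ST -> P t j = (t == j)%:R.
Proof.
move=> tS; case: (eqVneq t j) => [<-|ne]; first by rewrite Pabs.
have E := P1 t; rewrite (bigD1 t) //= Pabs // in E.
have h : \sum_(i | i != t) P t i = 0 by apply: (addrI 1); rewrite E addr0.
have := @psumr_eq0P _ _ _ (P t) (fun k _ => P0 t k) h j.
by rewrite eq_sym ne => ->.
Qed.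

Definition q i := expR (- r i / lam).
Definition cc (delta : R) := expR (delta / lam) - 1.
Definition dfun (delta : R) i := if i \in ST then expR (delta / lam) else q i.
Definition Dc (c : R) i := if i \in ST then 2 else q i - c.
Definition Mm delta := Mdom (dfun delta) P.
Definition Gm c := Mdom (Dc c) P.

Lemma q_gt1 i : i \notin ST -> 1 < q i.
Proof. by move=> iS; rewrite expR_gt1 divr_gt0 // oppr_gt0 rneg. Qed.

Lemma RP_eq delta : R_delta ST r lam delta - P = Mm delta.
Proof.
apply/matrixP => i j; rewrite !mxE /reward_delta /dfun /q mulr_natl.
by case: (i \in ST); rewrite ?opprK.
Qed.

Lemma Mterm delta t j : t \in ST -> Mm delta t j = (t == j)%:R * cc delta.
Proof. by move=> tS; rewrite mxE /dfun tS Pterm // /cc mulrBr mulr1. Qed.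

Lemma Gterm c t j : t \in ST -> Gm c t j = (t == j)%:R * 1.
Proof.
move=> tS; rewrite mxE /Dc tS Pterm //; case: (t == j); rewrite /= ?mul1r ?mul0r; lra.
Qed.

Lemma dfun_gt1 delta i : 0 < delta -> 1 < dfun delta i.
Proof.
move=> d0; rewrite /dfun; case: ifP => iS; last by rewrite q_gt1 ?iS.
by rewrite expR_gt1 divr_gt0.
Qed.

Lemma Mm_unit delta : 0 < delta -> Mm delta \in unitmx.
Proof.
move=> d0; apply: unit_of_ker => x Hx.
apply: (@dom_ker _ _ _ _ 0 _ P0 P1); first by rewrite scale0r; exact: Hx.
move=> i _; rewrite subr0 gtr0_norm ?dfun_gt1 //.
by apply: (lt_trans ltr01); apply: dfun_gt1.
Qed.

Lemma cc_gt0 delta : 0 < delta -> 0 < cc delta.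
Proof. by move=> d0; rewrite /cc subr_gt0 expR_gt1 divr_gt0. Qed.


Lemma Zdelta_E delta : Z_delta ST P r lam delta = invmx (Mm delta).
Proof. by rewrite /Z_delta RP_eq. Qed.

Lemma principal delta : 0 < delta ->
  (forall i, i \notin ST -> 1 + cc delta < q i) ->
  principal_eigenvalue (Z_delta ST P r lam delta) (1 / (expR (delta / lam) - 1)).
Proof.
move=> d0 Hq.
have c0 := cc_gt0 _ d0.
have Mu := Mm_unit _ d0.
have xE : ((1 / (expR (delta / lam) - 1))%:C = ((cc delta)%:C)^-1)%C.
  by rewrite div1r fmorphV.
have cC0 : (0 : R[i]) < (cc delta)%:C%C by rewrite -(rmorph0 (real_complex R)) ltcR.
rewrite /principal_eigenvalue xE Zdelta_E cplx_mxE map_invmx -cplx_mxE /Mm cplx_Mdom.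
have Mcu : Mdom (fun i => (dfun delta i)%:C%C) (cplx_mx P) \in unitmx.
  by rewrite -cplx_Mdom cplx_mxE map_unitmx.
have HS : forall t, t \in ST -> forall j,
    Mdom (fun i => (dfun delta i)%:C%C) (cplx_mx P) t j = (t == j)%:R * (cc delta)%:C%C.
  move=> t tS j; rewrite -cplx_Mdom mxE Mterm // rmorphM /=.
  by case: (t == j); rewrite /= ?rmorph1 ?rmorph0.
have Q0 : forall i j, 0 <= cplx_mx P i j.
  by move=> i j; rewrite mxE -(rmorph0 (real_complex R)) lecR P0.
have Q1 : forall i, \sum_j cplx_mx P i j = 1.
  move=> i; under eq_bigr do rewrite mxE.
  by rewrite -rmorph_sum P1 rmorph1.
have [t tS] : exists t, t \in ST.
  by move: STne; rewrite card_gt0 => /set0Pn.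
split.
  apply: (eig_exists _ _ _ _ _ (HS t tS)) => //; by rewrite gt_eqF.
move=> mu ev neq.
rewrite [`|_^-1|]ger0_norm ?invr_ge0 ?ltW //.
apply: (@eig_bound _ _ _ _ (mem ST) _ _ Q0 Q1 HS) => //.
move=> i iS0; have iS : i \notin ST by [].
have iSf : (i \in ST) = false by apply: negbTE.
rewrite ger0_norm; last first.
  by rewrite /dfun iSf -(rmorph0 (real_complex R)) lecR ltW // (lt_trans ltr01) ?q_gt1.
rewrite /dfun iSf -(rmorph1 (real_complex R)) -rmorphD ltcR; exact: Hq.
Qed.


Definition St : 'M[R]_(n, #|ST|) := \matrix_(i, k) (i == enum_val k)%:R.
Definition Bm c : 'M[R]_(#|ST|, n) := St^T *m (invmx (Gm c))^T.

Lemma StTSt : St^T *m St = 1%:M.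
Proof.
apply/matrixP => k l; rewrite !mxE (bigD1 (enum_val k)) //= big1 ?addr0.
  by rewrite !mxE eqxx mul1r (inj_eq enum_val_inj).
by move=> i /negbTE ne; rewrite !mxE ne mul0r.
Qed.

Lemma St_free : row_free St^T.
Proof. by apply/row_freeP; exists St; exact: StTSt. Qed.

Lemma Gm_unit c : (forall i, i \notin ST -> 1 + c < q i) -> Gm c \in unitmx.
Proof.
move=> Hq; apply: unit_of_ker => x Hx.
apply: (@dom_ker _ _ _ _ 0 _ P0 P1); first by rewrite scale0r; exact: Hx.
move=> i _; rewrite subr0 /Dc; case: ifP => iS.
  by rewrite ger0_norm //; lra.
have := Hq i (negbT iS) => h.
by rewrite ger0_norm; lra.
Qed.

Lemma Bm_free c : Gm c \in unitmx -> row_free (Bm c).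
Proof.
move=> Gu; rewrite /row_free /Bm mxrankMfree; first exact: St_free.
by rewrite row_free_unit unitmx_tr unitmx_inv.
Qed.

Lemma Mdom_mul k (D : 'I_n -> R) (X : 'M[R]_(n, k)) i j :
  (Mdom D P *m X) i j = D i * X i j - \sum_l P i l * X l j.
Proof.
rewrite mxE; under eq_bigr do rewrite mxE mulrBl.
rewrite sumrB; congr (_ - _).
rewrite (bigD1 i) //= eqxx mul1r big1 ?addr0 // => l /negbTE.
by rewrite eq_sym => ->; rewrite !mul0r.
Qed.

Lemma Psum_term k (X : 'M[R]_(n, k)) t j : t \in ST -> \sum_l P t l * X l j = X t j.
Proof.
move=> tS; rewrite (bigD1 t) //= Pterm // eqxx mul1r big1 ?addr0 // => l /negbTE ne.
by rewrite Pterm // eq_sym ne mul0r.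
Qed.

Lemma MX_eq delta k (X : 'M[R]_(n, k)) :
  (forall i j, i \notin ST -> (Gm (cc delta) *m X) i j = 0) ->
  Mm delta *m X = cc delta *: X.
Proof.
move=> HG; apply/matrixP => i j; rewrite Mdom_mul mxE /dfun.
case: ifP => iS; first by rewrite Psum_term // /cc; ring.
have := HG i j (negbT iS); rewrite Mdom_mul /Dc iS => h.
have hS : \sum_l P i l * X l j = (q i - cc delta) * X i j.
  by apply/eqP; rewrite eq_sym -subr_eq0 h.
by rewrite hS; ring.
Qed.

Lemma GSt_zero c i j : i \notin ST -> (Gm c *m (invmx (Gm c) *m St)) i j = 0 \/ Gm c \notin unitmx.
Proof.
move=> iS; case Gu: (Gm c \in unitmx); last by right.
left; rewrite mulmxA mulmxV // mul1mx mxE.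
case: eqP => // e; move: iS; rewrite e enum_valP //.
Qed.

Lemma Bm_eig delta : 0 < delta -> Gm (cc delta) \in unitmx ->
  (Bm (cc delta) <= right_eigenspace (Z_delta ST P r lam delta) (1 / (expR (delta / lam) - 1)))%MS.
Proof.
move=> d0 Gu; apply/eigenspaceP.
set X := invmx (Gm (cc delta)) *m St.
have BX : Bm (cc delta) = X^T by rewrite /X trmx_mul.
have MX : Mm delta *m X = cc delta *: X.
  apply: MX_eq => i j iS; have [//|] := GSt_zero (cc delta) i j iS.
  by rewrite Gu.
have Mu := Mm_unit _ d0.
have c0 := cc_gt0 _ d0.
have ZX : Z_delta ST P r lam delta *m X = (cc delta)^-1 *: X.
  rewrite Zdelta_E.
  have H : X = (cc delta)^-1 *: (Mm delta *m X) by rewrite MX scalerA mulVf ?gt_eqF // scale1r.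
  by rewrite {1}H -scalemxAr mulmxA mulVmx // mul1mx.
rewrite BX -trmx_mul ZX /cc div1r.
by rewrite linearZ.
Qed.

Lemma vSt (v : 'rV[R]_n) k : (v *m St) 0 k = v 0 (enum_val k).
Proof.
rewrite mxE (bigD1 (enum_val k)) //= big1 ?addr0; first by rewrite mxE eqxx mulr1.
by move=> l /negbTE ne; rewrite mxE ne mulr0.
Qed.

Lemma eig_rank delta : 0 < delta -> (forall i, i \notin ST -> 1 + cc delta < q i) ->
  (\rank (right_eigenspace (Z_delta ST P r lam delta) (1 / (expR (delta / lam) - 1))) <= #|ST|)%N.
Proof.
move=> d0 Hq.
set E := right_eigenspace _ _.
have c0 := cc_gt0 _ d0.
have Mu := Mm_unit _ d0.
have K0 : (E :&: kermx St)%MS = 0.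
  apply/eqP/rowV0P => v; rewrite sub_capmx => /andP[/eigenspaceP vE /sub_kermxP vK].
  apply: trmx_inj; rewrite trmx0.
  set x := v^T.
  have Zx : Z_delta ST P r lam delta *m x = (cc delta)^-1 *: x.
    by rewrite /x -[Z_delta _ _ _ _ _]trmxK -trmx_mul vE linearZ /= div1r.
  have Mx : Mm delta *m x = cc delta *: x.
    rewrite Zdelta_E in Zx.
    have H : x = (cc delta)^-1 *: (Mm delta *m x) by rewrite scalemxAr -Zx mulmxA mulmxV // mul1mx.
    by rewrite {2}H scalerA mulfV ?gt_eqF // scale1r.
  apply: (@dom_ker _ _ _ _ _ _ P0 P1 Mx) => i xi.
  case iS: (i \in ST).
    move: xi; rewrite /x mxE.
    have := congr1 (fun w : 'rV[R]_#|ST| => w 0 (enum_rank_in iS i)) vK.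
    by rewrite vSt enum_rankK_in // mxE => ->; rewrite eqxx.
  have := Hq i (negbT iS); rewrite /dfun iS => h.
  by rewrite ger0_norm; lra.
have := mxrank_mul_ker E St; rewrite K0 mxrank0 addn0 => <-.
exact: rank_leq_col.
Qed.

Lemma rank_eq k1 k2 (A : 'M[R]_(k1, n)) (B : 'M[R]_(k2, n)) :
  (A <= B)%MS -> (B <= A)%MS -> \rank A = \rank B.
Proof. by move=> h1 h2; apply/eqP; rewrite eqn_leq !mxrankS. Qed.

Lemma eig_space delta : 0 < delta -> (forall i, i \notin ST -> 1 + cc delta < q i) ->
  let E := right_eigenspace (Z_delta ST P r lam delta) (1 / (expR (delta / lam) - 1)) in
  [/\ (Bm (cc delta) <= E)%MS, (E <= Bm (cc delta))%MS, \rank E = #|ST|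
    & row_free (Bm (cc delta))].
Proof.
move=> d0 Hq E.
have Gu := Gm_unit _ Hq.
have fB := Bm_free _ Gu.
have sBE : (Bm (cc delta) <= E)%MS by exact: Bm_eig.
have rB : \rank (Bm (cc delta)) = #|ST| by apply/eqP.
have e : (Bm (cc delta) == E)%MS.
  rewrite -(mxrank_leqif_eq sBE).2 eqn_leq mxrankS //= rB.
  exact: eig_rank.
move: e => /andP[_ sEB].
split => //; rewrite -rB; exact: rank_eq.
Qed.

Lemma rowSt p (A : 'M[R]_(n, p)) k : row k (St^T *m A) = row (enum_val k) A.
Proof.
apply/rowP => j; rewrite !mxE (bigD1 (enum_val k)) //= big1 ?addr0; first by rewrite !mxE eqxx mul1r.
by move=> l /negbTE ne; rewrite !mxE ne mul0r.
Qed.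

Lemma row_cols (A : 'M[R]_n) (i : 'I_n) :
  row i (cols_span ST A) = (i \in ST)%:R *: row i A^T.
Proof. by rewrite /cols_span row_mul row_diag_mx -scalemxAl -rowE mxE. Qed.

Lemma cols_St (A : 'M[R]_n) :
  (cols_span ST A <= St^T *m A^T)%MS /\ (St^T *m A^T <= cols_span ST A)%MS.
Proof.
split; apply/row_subP => i.
  rewrite row_cols; case: (boolP (i \in ST)) => iS /=; last by rewrite scale0r sub0mx.
  by rewrite scale1r -(enum_rankK_in iS iS) -rowSt row_sub.
rewrite rowSt; have := row_cols A (enum_val i); rewrite enum_valP scale1r => <-; exact: row_sub.
Qed.

Lemma MY delta : Mm delta *m (invmx (Gm 0) *m St) = cc delta *: St.
Proof.
have G0u : Gm 0 \in unitmx.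
  by apply: Gm_unit => i iS; rewrite addr0; exact: q_gt1.
set Y := invmx (Gm 0) *m St.
have GY : Gm 0 *m Y = St by rewrite /Y mulmxA mulmxV // mul1mx.
apply/matrixP => i j; rewrite Mdom_mul [RHS]mxE /dfun.
have := congr1 (fun A : 'M[R]_(n, #|ST|) => A i j) GY; rewrite Mdom_mul /Dc.
case: ifP => iS.
  rewrite Psum_term // => h.
  have hY : Y i j = St i j by rewrite -h; ring.
  by rewrite hY /cc; ring.
rewrite subr0 => h; rewrite h.
have -> : St i j = 0.
  rewrite mxE; case: eqP => // e; move: iS; rewrite e enum_valP //.
by rewrite mulr0.
Qed.

Lemma cols_Bm delta : 0 < delta ->
  (cols_span ST (Z_delta ST P r lam delta) <= Bm 0)%MS /\
  (Bm 0 <= cols_span ST (Z_delta ST P r lam delta))%MS.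
Proof.
move=> d0.
have Mu := Mm_unit _ d0.
have c0 := cc_gt0 _ d0.
have HB : Bm 0 = cc delta *: (St^T *m (Z_delta ST P r lam delta)^T).
  rewrite Zdelta_E /Bm -trmx_mul -[St^T *m _]trmx_mul -linearZ /=; congr (_^T).
  rewrite scalemxAr -MY mulmxA mulVmx // mul1mx //.
have [h1 h2] := cols_St (Z_delta ST P r lam delta).
rewrite HB; split.
  by apply: (submx_trans h1); rewrite eqmx_scale // gt_eqF.
by apply: (submx_trans _ h2); rewrite eqmx_scale // gt_eqF.
Qed.

Lemma mx_cvg {T : Type} (F : set_system T) {FF : Filter F} p k
  (f : T -> 'M[R]_(p, k)) (L : 'M[R]_(p, k)) :
  (forall i j, (fun x => f x i j) @ F --> L i j) -> f @ F --> L.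
Proof.
move=> H; apply/cvgrPdist_le => /= e e0.
near=> x.
rewrite /Num.Def.normr/= mx_normrE (bigmax_le _ (ltW e0))//= => i _.
rewrite !mxE/=.
move: i; near: x; apply: filter_forall => /= i.
exact: ((cvgrPdist_le _ _).1 (H i.1 i.2)).
Unshelve. all: by end_near. Qed.

Lemma proj_poly k (Bp : 'M[{poly R}]_(k, n)) (c : R) :
  row_free (map_mx (horner_eval c) Bp) ->
  proj (map_mx (horner_eval c) Bp) =
  ((\det (Bp *m Bp^T)).[c])^-1 *: map_mx (horner_eval c) (Bp^T *m \adj (Bp *m Bp^T) *m Bp).
Proof.
move=> fB; have U := @BBt_unit _ _ _ _ fB.
have E : map_mx (horner_eval c) Bp *m (map_mx (horner_eval c) Bp)^T
   = map_mx (horner_eval c) (Bp *m Bp^T) by rewrite map_mxM map_trmx.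
rewrite /proj /invmx U E det_map_mx -map_mx_adj -scalemxAr -scalemxAl.
by congr (_ *: _); rewrite !map_mxM map_trmx.
Qed.

Definition Gp : 'M[{poly R}]_n := \matrix_(i, j)
  ((i == j)%:R * (if i \in ST then 2%:P else (q i)%:P - 'X) - (P i j)%:P).

Lemma Gp_ev c : map_mx (horner_eval c) Gp = Gm c.
Proof.
apply/matrixP => i j; rewrite !mxE /horner_eval /Dc.
case: (i \in ST); case: (i == j); rewrite /= !hornerE //.
Qed.

Definition Vp : 'M[{poly R}]_(#|ST|, n) := (map_mx polyC St)^T *m (\adj Gp)^T.

Lemma Vp_ev c : Gm c \in unitmx ->
  map_mx (horner_eval c) Vp = (\det Gp).[c] *: Bm c.
Proof.
move=> Gu.
rewrite /Vp map_mxM -!map_trmx map_mx_adj Gp_ev.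
have -> : map_mx (horner_eval c) (map_mx polyC St) = St.
  by apply/matrixP => i j; rewrite !mxE /horner_eval hornerC.
have -> : (\det Gp).[c] = \det (Gm c) by rewrite -Gp_ev det_map_mx.
by rewrite /Bm /invmx Gu linearZ /= scalemxAr scalerA mulrV ?scale1r // -unitmxE.
Qed.

Definition Dq := \det (Vp *m Vp^T).
Definition Wp := Vp^T *m \adj (Vp *m Vp^T) *m Vp.
Definition hh c : 'M[R]_n := (Dq.[c])^-1 *: map_mx (horner_eval c) Wp.

Lemma hh_proj c : Gm c \in unitmx -> proj (Bm c) = hh c /\ Dq.[c] != 0.
Proof.
move=> Gu.
have d0 : (\det Gp).[c] != 0.
  by rewrite -[_.[c]]/(horner_eval c _) -det_map_mx Gp_ev -unitfE -unitmxE.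
have fB := Bm_free _ Gu.
have fV : row_free (map_mx (horner_eval c) Vp).
  by rewrite Vp_ev // /row_free (eqmx_scale _ d0).
split.
  rewrite /hh /Dq /Wp -proj_poly // Vp_ev //; apply: proj_eq => //.
  - by rewrite -Vp_ev.
  - by rewrite eqmx_scale.
  - by rewrite eqmx_scale.
have U := @BBt_unit _ _ _ _ fV.
rewrite -[_.[c]]/(horner_eval c _) /Dq -det_map_mx map_mxM -map_trmx -unitfE -unitmxE //.
Qed.

Lemma hh_cont : Dq.[0] != 0 -> hh c @[c --> (0 : R)] --> hh 0.
Proof.
move=> D0; apply: mx_cvg => i j.
rewrite /hh mxE.
under [X in X @ _]funext do rewrite mxE.
apply: cvgM.
  by apply: cvgV => //; exact: continuous_horner.
have -> : (fun x : R => map_mx (horner_eval x) Wp i j) = horner (Wp i j).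
  by apply/funext => x; rewrite mxE.
have := @continuous_horner _ (Wp i j) 0.
by rewrite [X in _ -> _ --> X]mxE.
Qed.

Definition gmin := \big[Order.min/1]_(i | i \notin ST) (q i - 1).

Lemma gmin_gt0 : 0 < gmin.
Proof.
rewrite /gmin; apply: (big_ind (fun x : R => 0 < x)) => //= [x y hx hy|i iS].
  by rewrite lt_min hx hy.
by rewrite subr_gt0 q_gt1.
Qed.

Lemma gmin_le i : i \notin ST -> gmin <= q i - 1.
Proof. by move=> iS; rewrite /gmin (@bigmin_le_cond _ _ _ 1 i (fun j => j \notin ST)). Qed.

Definition dlt0 := lam * ln (1 + gmin).

Lemma dlt0_gt0 : 0 < dlt0.
Proof. by rewrite /dlt0 mulr_gt0 // ln_gt0 // ltrDl gmin_gt0. Qed.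

Lemma Hq_small delta : delta < dlt0 -> forall i, i \notin ST -> 1 + cc delta < q i.
Proof.
move=> dl i iS.
have g0 := gmin_gt0.
have h1 : expR (delta / lam) < 1 + gmin.
  rewrite -[X in _ < X]lnK ?posrE ?addr_gt0 // ltr_expR ltr_pdivrMr // mulrC //.
have := gmin_le _ iS; rewrite /cc => h2; lra.
Qed.

Lemma Hq0 i : i \notin ST -> 1 + 0 < q i.
Proof. by move=> iS; rewrite addr0 q_gt1. Qed.

Lemma cc_cvg : cc delta @[delta --> (0 : R)] --> (0 : R).
Proof.
have h : cc delta @[delta --> (0:R)] --> expR (0 / lam) - 1.
  apply: cvgB; last exact: cvg_cst.
  apply: (cvg_comp _ _ (cvgM cvg_id (cvg_cst _))).
  exact: continuous_expR.
by move: h; rewrite mul0r expR0 subrr.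
Qed.

Theorem main :
  (forall delta : R, 0 < delta -> R_delta ST r lam delta - P \in unitmx) /\
  (exists delta0 : R, 0 < delta0 /\
     forall delta : R, 0 < delta < delta0 ->
       principal_eigenvalue (Z_delta ST P r lam delta)
         (1 / (expR (delta / lam) - 1)) /\
       \rank (right_eigenspace (Z_delta ST P r lam delta)
                (1 / (expR (delta / lam) - 1))) = #|ST| /\
       \rank (cols_span ST (Z_delta ST P r lam delta)) = #|ST|) /\
  (`| orth_proj (cols_span ST (Z_delta ST P r lam delta))
      - orth_proj (right_eigenspace (Z_delta ST P r lam delta)
                     (1 / (expR (delta / lam) - 1))) |
     @[delta --> 0^'+] --> 0).
Proof.
have G0u : Gm 0 \in unitmx by apply: Gm_unit; exact: Hq0.
have fB0 := Bm_free _ G0u.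
split.
  by move=> delta d0; rewrite RP_eq; exact: Mm_unit.
split.
  exists dlt0; split; first exact: dlt0_gt0.
  move=> delta /andP[dp dl]; have Hq := Hq_small _ dl.
  split; first exact: principal.
  have [_ _ rE _] := eig_space _ dp Hq.
  split => //.
  have [s1 s2] := cols_Bm _ dp.
  by rewrite (rank_eq _ _ _ _ s1 s2); apply/eqP.
have [p0 D0] := hh_proj _ G0u.
have hc := hh_cont D0.
have comp : hh (cc delta) @[delta --> (0 : R)] --> hh 0 := cvg_comp _ _ cc_cvg hc.
have right : hh (cc delta) @[delta --> (0 : R)^'+] --> hh 0 := cvg_at_right_filter comp.
have nice : `|hh 0 - hh (cc delta)| @[delta --> (0 : R)^'+] --> (0 : R).
  apply/norm_cvg0P; rewrite -(subrr (hh 0)).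
  exact: (cvgB (cvg_cst _) right).
apply: cvg_trans nice.
apply: near_eq_cvg.
near=> delta.
have dp : 0 < delta by near: delta; exact: nbhs_right_gt.
have dl : delta < dlt0 by near: delta; exact: nbhs_right_lt dlt0_gt0.
have Hq := Hq_small _ dl.
have [sBE sEB _ fB] := eig_space _ dp Hq.
have [s1 s2] := cols_Bm _ dp.
rewrite (@orth_projE _ _ _ _ _ fB0 s2 s1) (@orth_projE _ _ _ _ _ fB sBE sEB) p0.
by have [-> _] := hh_proj _ (Gm_unit _ Hq).
Unshelve. all: by end_near.
Qed.

End Main.

Theorem theorem3p11 (R : realType) (n : nat) (ST : {set 'I_n})
  (P : 'M[R]_n) (lam : R) (r : 'I_n -> R) :
  (0 < #|ST|)%N ->
  row_stochastic P ->
  (forall t, t \in ST -> P t t = 1) ->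
  0 < lam ->
  (forall s, s \notin ST -> r s < 0) ->
  (forall delta : R, 0 < delta -> R_delta ST r lam delta - P \in unitmx) /\
  (exists delta0 : R, 0 < delta0 /\
     forall delta : R, 0 < delta < delta0 ->
       principal_eigenvalue (Z_delta ST P r lam delta)
         (1 / (expR (delta / lam) - 1)) /\
       \rank (right_eigenspace (Z_delta ST P r lam delta)
                (1 / (expR (delta / lam) - 1))) = #|ST| /\
       \rank (cols_span ST (Z_delta ST P r lam delta)) = #|ST|) /\
  (`| orth_proj (cols_span ST (Z_delta ST P r lam delta))
      - orth_proj (right_eigenspace (Z_delta ST P r lam delta)
                     (1 / (expR (delta / lam) - 1))) |
     @[delta --> 0^'+] --> 0).
Proof.
move=> STne Pst Pabs lam0 rneg.
by apply: main.
Qed.
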